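(* Let $n>2$ be an integer, $a\in\mathbb{R}$ with $a\ne0$, and for $c\in\mathbb{R}$ let \[\lambda_\pm(c)=\tfrac12\Bigl(2a-(n-1)c\pm\sqrt{\bigl(2a+(n+1)c\bigr)^2+4n}\Bigr),\qquad \lambda_{\lim}(c)=c-2a.\] Put $\varphi=2\pi/n$, $q=\lfloor n/2\rfloor$ and $c_k=\dfrac{4a^2\cos(k\varphi)(1-\cos(k\varphi))+n}{2(n+1)a(\cos(k\varphi)-1)}$ for $k=1,\dots,q$. If $a>0$, let $c_-$ be the abscissa of the point where $\lambda_-(c)=\lambda_{\lim}(c)$; if $a<0$, let $c_+$ be the abscissa of the point where $\lambda_+(c)=\lambda_{\lim}(c)$. Then all $c_k$, $k=1,\dots,q$, lie in $(-\infty,c_-]$ when $a>0$, and in $[c_+,\infty)$ when $a<0$.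
   Context: $\lambda_\pm(c)$ and $c+2a\cos(k\varphi)$ are the eigenvalues of the $(n+1)\times(n+1)$ symmetric matrix $m_n(a,\pm1,c)$ (rows/columns indexed $0,\dots,n$, $(0,0)$-entry $-nc$, $(0,j)$- and $(j,0)$-entries $\pm1$, lower-right block $\mathrm{circ}(c,a,0,\dots,0,a)$); $c_k$ is the abscissa at which the curve $\lambda=c+2a\cos(k\varphi)$ meets $\lambda=\lambda_-(c)$ (if $a>0$) or $\lambda=\lambda_+(c)$ (if $a<0$). *)

(* Defs.v *)
From Stdlib Require Import Reals Lra Lia.
Open Scope R_scope.

Definition lam_plus (n : nat) (a c : R) : R :=
  (2*a - (INR n - 1)*c + sqrt ((2*a + (INR n + 1)*c)^2 + 4*INR n)) / 2.
Definition lam_minus (n : nat) (a c : R) : R :=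
  (2*a - (INR n - 1)*c - sqrt ((2*a + (INR n + 1)*c)^2 + 4*INR n)) / 2.
Definition lam_lim (a c : R) : R := c - 2*a.

Definition phi (n : nat) : R := 2*PI / INR n.

Definition ck (n : nat) (a : R) (k : nat) : R :=
  let t := cos (INR k * phi n) in
  (4*a^2*t*(1 - t) + INR n) / (2*(INR n + 1)*a*(t - 1)).

(* Main.v *)
Require Import Defs.
From Stdlib Require Import Reals Lra Lia.
Open Scope R_scope.

Lemma sqrt_eq_iff (X y : R) : 0 <= X -> (sqrt X = y <-> 0 <= y /\ y^2 = X).
Proof.
  intros HX; split.
  - intros <-; split; [apply sqrt_pos | apply pow2_sqrt; lra].
  - intros [Hy <-]; apply sqrt_pow2; lra.
Qed.

Lemma key_eq (N a c : R) : 0 < N -> a <> 0 ->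
  ((6*a - (N+1)*c)^2 = (2*a + (N+1)*c)^2 + 4*N <-> c = (8*a^2 - N)/(4*a*(N+1))).
Proof.
  intros HN Ha; split.
  - intros H.
    assert (E : 16*a*(N+1)*c = 32*a^2 - 4*N) by (ring_simplify in H; nra).
    apply Rmult_eq_reg_l with (4*a*(N+1)); [|apply Rmult_integral_contrapositive; split; [apply Rmult_integral_contrapositive; split|]; lra].
    field_simplify; [nra| lra].
  - intros ->. field. lra.
Qed.

Lemma ck_bound (N a t : R) : 2 < N -> a <> 0 -> -1 <= t < 1 ->
  let q := (4*a^2*t*(1 - t) + N) / (2*(N + 1)*a*(t - 1)) in
  let cm := (8*a^2 - N)/(4*a*(N+1)) in
  (0 < a -> q <= cm) /\ (a < 0 -> cm <= q).
Proof.
  intros HN Ha Ht q cm.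
  set (s := 1 - t).
  assert (Hs : 0 < s <= 2) by (unfold s; lra).
  assert (Hq : q = (-8*a^2*(1-s) - 2*N/s) / (4*a*(N+1))).
  { unfold q; replace t with (1 - s) by (unfold s; ring). field. repeat split; lra. }
  assert (Ineq : -8*a^2*(1-s) - 2*N/s <= 8*a^2 - N).
  { assert (N <= 2*N/s).
    { apply Rmult_le_reg_r with s; [lra|]. unfold Rdiv. rewrite Rmult_assoc, Rinv_l by lra. nra. }
    nra. }
  rewrite Hq; unfold cm; split; intros Hsa.
  - unfold Rdiv; apply Rmult_le_compat_r; [|lra].
    left; apply Rinv_0_lt_compat; nra.
  - unfold Rdiv. assert (HD : / (4*a*(N+1)) < 0) by (apply Rinv_lt_0_compat; nra).
    nra.
Qed.

Lemma cos_range (n k : nat) : (2 < n)%nat -> (1 <= k <= n / 2)%nat ->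
  -1 <= cos (INR k * phi n) < 1.
Proof.
  intros Hn Hk.
  assert (H2k : (2*k <= n)%nat) by (pose proof (Nat.div_mod n 2); pose proof (Nat.mod_upper_bound n 2); lia).
  assert (HN : 0 < INR n) by (apply lt_0_INR; lia).
  assert (Hk1 : 1 <= INR k) by (apply (le_INR 1); lia).
  assert (Hkn : 2 * INR k <= INR n) by (replace (2 * INR k) with (INR (2*k)) by (rewrite mult_INR; simpl; ring); apply le_INR; exact H2k).
  split; [apply COS_bound|].
  rewrite <- cos_0.
  pose proof PI_RGT_0.
  assert (Hp : 0 < phi n) by (unfold phi; unfold Rdiv; apply Rmult_lt_0_compat; [lra|apply Rinv_0_lt_compat; lra]).
  assert (Hle : INR k * phi n <= PI).
  { unfold phi. replace (INR k * (2*PI/INR n)) with (PI * (2*INR k / INR n)) by (field; lra).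
    assert (2*INR k / INR n <= 1).
    { apply Rmult_le_reg_r with (INR n); [lra|]. unfold Rdiv; rewrite Rmult_assoc, Rinv_l by lra. lra. }
    nra. }
  apply cos_decreasing_1; nra.
Qed.

Theorem corollary3 (n : nat) (a : R) :
  (2 < n)%nat -> a <> 0 ->
  (0 < a ->
     exists cm : R,
       (forall c : R, lam_minus n a c = lam_lim a c <-> c = cm) /\
       (forall k : nat, (1 <= k <= n / 2)%nat -> ck n a k <= cm)) /\
  (a < 0 ->
     exists cp : R,
       (forall c : R, lam_plus n a c = lam_lim a c <-> c = cp) /\
       (forall k : nat, (1 <= k <= n / 2)%nat -> cp <= ck n a k)).
Proof.
  intros Hn Ha.
  assert (HN : 2 < INR n) by (replace 2 with (INR 2) by (simpl; ring); apply lt_INR; lia).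
  set (N := INR n) in *.
  assert (HX : forall c, 0 <= (2*a + (N+1)*c)^2 + 4*N) by (intros c; pose proof (pow2_ge_0 (2*a + (N+1)*c)); lra).
  split; intros Hsa; exists ((8*a^2 - N)/(4*a*(N+1))); split.
  - intros c. unfold lam_minus, lam_lim. fold N.
    rewrite <- (key_eq N a c) by lra.
    split.
    + intros H. assert (E : sqrt ((2*a + (N+1)*c)^2 + 4*N) = 6*a - (N+1)*c) by lra.
      apply sqrt_eq_iff in E; [|apply HX]. destruct E as [_ E]; rewrite E; ring.
    + intros H. assert (Hc := H). apply key_eq in Hc; [|lra|lra].
      assert (E : sqrt ((2*a + (N+1)*c)^2 + 4*N) = 6*a - (N+1)*c).
      { apply sqrt_eq_iff; [apply HX|]. split; [|rewrite H; ring].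
        rewrite Hc. replace (6 * a - (N + 1) * ((8 * a ^ 2 - N) / (4 * a * (N + 1)))) with ((16*a^2+N)/(4*a)) by (field; lra).
        unfold Rdiv; apply Rmult_le_pos; [nra|]. left; apply Rinv_0_lt_compat; lra. }
      lra.
  - intros k Hk. unfold ck. fold N. apply ck_bound; [lra|lra|apply cos_range; assumption|lra].
  - intros c. unfold lam_plus, lam_lim. fold N.
    rewrite <- (key_eq N a c) by lra.
    split.
    + intros H. assert (E : sqrt ((2*a + (N+1)*c)^2 + 4*N) = (N+1)*c - 6*a) by lra.
      apply sqrt_eq_iff in E; [|apply HX]. destruct E as [_ E]; rewrite <- E; ring.
    + intros H. assert (Hc := H). apply key_eq in Hc; [|lra|lra].
      assert (E : sqrt ((2*a + (N+1)*c)^2 + 4*N) = (N+1)*c - 6*a).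
      { apply sqrt_eq_iff; [apply HX|]. split; [|rewrite <- H; ring].
        rewrite Hc. replace ((N + 1) * ((8 * a ^ 2 - N) / (4 * a * (N + 1))) - 6*a) with ((16*a^2+N)/(-4*a)) by (field; lra).
        unfold Rdiv; apply Rmult_le_pos; [nra|]. left; apply Rinv_0_lt_compat; lra. }
      lra.
  - intros k Hk. unfold ck. fold N. apply ck_bound; [lra|lra|apply cos_range; assumption|lra].
Qed.
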